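(* Let $f:\mathbb{R}^2_+\to\mathbb{R}$ be continuous, with $f(0,0)>0$, and assume there exists $R>0$ such that $f(x,y)<0$ whenever $x^2+y^2>R^2$. Then the zero set $Z=\{\mathbf z\in\mathbb{R}^2_+ : f(\mathbf z)=0\}$ has a compact connected subset $S$ which intersects both sets $\{(0,y) : r\le y\le R\}$ and $\{(x,0) : r\le x\le R\}$ for some $r\in(0,R)$.
   Context: $\mathbb{R}^2_+$ denotes the closed positive quadrant $\{(x,y):x\ge0,\,y\ge0\}$. *)

(* Defs.v *)
From Stdlib Require Import Reals List.
Open Scope R_scope.

Definition dist2 (p q : R * R) : R :=
  sqrt ((fst p - fst q) ^ 2 + (snd p - snd q) ^ 2).

Definition quadrant (p : R * R) : Prop := 0 <= fst p /\ 0 <= snd p.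

Definition continuous_on_quadrant (f : R * R -> R) : Prop :=
  forall p, quadrant p -> forall eps, 0 < eps ->
    exists delta, 0 < delta /\
      forall q, quadrant q -> dist2 q p < delta -> Rabs (f q - f p) < eps.

Definition open2 (U : R * R -> Prop) : Prop :=
  forall p, U p -> exists e, 0 < e /\ forall q, dist2 p q < e -> U q.

Definition compact2 (S : R * R -> Prop) : Prop :=
  forall (I : Type) (U : I -> R * R -> Prop),
    (forall i, open2 (U i)) ->
    (forall p, S p -> exists i, U i p) ->
    exists l : list I, forall p, S p -> exists i, In i l /\ U i p.

Definition connected2 (S : R * R -> Prop) : Prop :=
  ~ exists U V : R * R -> Prop,
      open2 U /\ open2 V /\
      (forall p, S p -> U p \/ V p) /\
      (exists p, S p /\ U p) /\
      (exists p, S p /\ V p) /\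
      (forall p, S p -> U p -> V p -> False).

(* Main.v *)
Require Import Defs.
From Stdlib Require Import Reals List Lra Psatz Classical ClassicalEpsilon Lia.
From Coquelicot Require Compactness.
Open Scope R_scope.

Lemma dist2_sym p q : dist2 p q = dist2 q p.
Proof. unfold dist2; f_equal; ring. Qed.

Lemma dist2_eucl p q : dist2 p q = dist_euc (fst p) (snd p) (fst q) (snd q).
Proof. unfold dist2, dist_euc, Rsqr; f_equal; ring. Qed.

Lemma dist2_tri p q r : dist2 p r <= dist2 p q + dist2 q r.
Proof. rewrite !dist2_eucl; apply triangle. Qed.

Lemma dist2_refl p : dist2 p p = 0.
Proof. unfold dist2. replace ((fst p - fst p) ^ 2 + (snd p - snd p) ^ 2) with 0 by ring. apply sqrt_0. Qed.

Lemma dist2_ge_x p q : Rabs (fst p - fst q) <= dist2 p q.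
Proof. unfold dist2. rewrite <- sqrt_Rsqr_abs. apply sqrt_le_1_alt. unfold Rsqr.
 pose proof (pow2_ge_0 (snd p - snd q)). lra. Qed.

Lemma dist2_ge_y p q : Rabs (snd p - snd q) <= dist2 p q.
Proof. unfold dist2. rewrite <- sqrt_Rsqr_abs. apply sqrt_le_1_alt. unfold Rsqr.
 pose proof (pow2_ge_0 (fst p - fst q)). lra. Qed.

Lemma dist2_le p q : dist2 p q <= Rabs (fst p - fst q) + Rabs (snd p - snd q).
Proof.
  unfold dist2. set (a := fst p - fst q). set (b := snd p - snd q).
  pose proof (Rabs_pos a); pose proof (Rabs_pos b).
  rewrite <- (sqrt_Rsqr (Rabs a + Rabs b)) by lra.
  apply sqrt_le_1_alt. unfold Rsqr.
  rewrite <- (pow2_abs a), <- (pow2_abs b). nra.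
Qed.

Lemma uniformize (T : R*R -> Prop) (M : R) (Pr : R*R -> R -> Prop) :
 (forall z, T z -> 0 <= fst z <= M /\ 0 <= snd z <= M) ->
 (forall z, ~ T z -> exists rho, 0 < rho /\ forall w, T w -> dist2 w z < rho -> False) ->
 (forall w eta eta', 0 < eta' <= eta -> Pr w eta -> Pr w eta') ->
 (forall z, T z -> exists r eta, 0 < r /\ 0 < eta /\ forall w, T w -> dist2 w z < r -> Pr w eta) ->
 exists eta, 0 < eta /\ forall w, T w -> Pr w eta.
Proof.
  intros Hb Hcl Hmono Hloc.
  assert (Hd : forall u v : R, exists d : posreal,
     (T (u,v) -> forall w, T w -> dist2 w (u,v) < 2 * d -> Pr w d) /\
     (~ T (u,v) -> forall w, T w -> dist2 w (u,v) < 2 * d -> False)).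
  { intros u v. destruct (classic (T (u,v))) as [HT|HT].
    - destruct (Hloc _ HT) as (r & eta & Hr & He & H).
      assert (Hp : 0 < Rmin (r/2) eta) by (apply Rmin_pos; lra).
      exists (mkposreal _ Hp); simpl; split; [|tauto].
      intros _ w Tw Hw. apply (Hmono w eta). split; [lra| apply Rmin_r].
      apply H; auto. pose proof (Rmin_l (r/2) eta). lra.
    - destruct (Hcl _ HT) as (rho & Hr & H).
      assert (Hp : 0 < rho / 2) by lra.
      exists (mkposreal _ Hp); simpl; split; [tauto|].
      intros _ w Tw Hw. apply (H w Tw). lra. }
  set (delta := fun u v => proj1_sig (constructive_indefinite_description _ (Hd u v))).
  assert (Hdelta : forall u v, (T (u,v) -> forall w, T w -> dist2 w (u,v) < 2 * delta u v -> Pr w (delta u v)) /\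
     (~ T (u,v) -> forall w, T w -> dist2 w (u,v) < 2 * delta u v -> False)).
  { intros u v. unfold delta. destruct (constructive_indefinite_description _ (Hd u v)) as [d Hdd]. exact Hdd. }
  destruct (Compactness.compactness_value_2d 0 M 0 M delta) as [d Hdv].
  exists d. split; [apply cond_pos|].
  intros w Tw. destruct (Hb w Tw) as [Hx Hy].
  pose proof (Hdv (fst w) (snd w) Hx Hy) as HH.
  apply NNPP. intro Hn. apply HH. intros (u & v & _ & _ & H1 & H2 & H3).
  apply Hn. destruct (Hdelta u v) as [HT HnT].
  assert (Hdist : dist2 w (u,v) < 2 * delta u v).
  { pose proof (dist2_le w (u,v)). simpl in H. lra. }
  destruct (classic (T (u,v))) as [T'|T'].
  - apply (Hmono w (delta u v)). split; [apply cond_pos| exact H3]. apply HT; auto.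
  - exfalso. apply (HnT T' w Tw Hdist).
Qed.

Definition closedset (T : R*R -> Prop) :=
  forall z, ~ T z -> exists rho, 0 < rho /\ forall w, T w -> dist2 w z < rho -> False.

Lemma closed_bounded_compact (T : R*R -> Prop) (M : R) :
 (forall z, T z -> 0 <= fst z <= M /\ 0 <= snd z <= M) ->
 closedset T -> compact2 T.
Proof.
  intros Hb Hcl I U Hop Hcov.
  destruct (uniformize T M (fun w eta => exists i, forall y, dist2 y w < eta -> U i y) Hb Hcl)
    as (eta & Heta & Hunif).
  { intros w e e' He (i & Hi). exists i. intros y Hy. apply Hi. lra. }
  { intros z Tz. destruct (Hcov z Tz) as (i & Hi). destruct (Hop i z Hi) as (e & He & Hball).
    exists (e/2), (e/2). split; [lra|]. split; [lra|]. intros w Tw Hw. exists i. intros y Hy.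
    apply Hball. pose proof (dist2_tri z w y). rewrite (dist2_sym z w), (dist2_sym w y) in H. lra. }
  assert (Hp : 0 < eta / 4) by lra.
  set (d := mkposreal _ Hp).
  assert (Hlist : forall l : list (Compactness.Tn 2 R), exists li : list I,
     forall t, In t l -> forall y, T y -> Compactness.close_n 2 d (fst y, (snd y, tt)) t ->
       exists i, In i li /\ U i y).
  { induction l as [|t l IH].
    - exists nil. intros t [].
    - destruct IH as (li & Hli).
      destruct (classic (exists x, T x /\ Compactness.close_n 2 d (fst x, (snd x, tt)) t)) as [(x & Tx & Hx)|Hn].
      + destruct (Hunif x Tx) as (i & Hi). exists (i :: li). intros t' [<-|Ht'] y Ty Hy.
        * exists i. split; [left; reflexivity|]. apply Hi.
          destruct t as (t1 & t2 & []). simpl in Hx, Hy.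
          pose proof (dist2_le y x). simpl in *.
          assert (Rabs (fst y - fst x) < eta / 2).
          { replace (fst y - fst x) with ((fst y - t1) - (fst x - t1)) by ring.
            eapply Rle_lt_trans; [apply Rabs_triang|]. rewrite Rabs_Ropp. lra. }
          assert (Rabs (snd y - snd x) < eta / 2).
          { replace (snd y - snd x) with ((snd y - t2) - (snd x - t2)) by ring.
            eapply Rle_lt_trans; [apply Rabs_triang|]. rewrite Rabs_Ropp. lra. }
          lra.
        * destruct (Hli t' Ht' y Ty Hy) as (i' & Hi' & HU). exists i'. split; [right; exact Hi'| exact HU].
      + exists li. intros t' [<-|Ht'] y Ty Hy.
        * exfalso. apply Hn. exists y. auto.
        * apply (Hli t' Ht' y Ty Hy). }
  pose proof (Compactness.compactness_list 2 (0, (0, tt)) (M, (M, tt)) (fun _ => d)) as Hcl2.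
  apply NNPP. intro Hno. apply Hcl2. intros (l & Hl).
  destruct (Hlist l) as (li & Hli). apply Hno. exists li.
  intros p Tp. destruct (Hb p Tp) as [Hx Hy].
  destruct (Hl (fst p, (snd p, tt))) as (t & Ht & _ & Hc).
  { simpl. tauto. }
  exact (Hli t Ht p Tp Hc).
Qed.

Inductive chain (K : R*R -> Prop) (e : R) : R*R -> R*R -> Prop :=
| ch0 z : K z -> chain K e z z
| chS z y w : K z -> dist2 z y < e -> chain K e y w -> chain K e z w.

Lemma chain_Kl K e z w : chain K e z w -> K z.
Proof. destruct 1; auto. Qed.

Lemma chain_Kr K e z w : chain K e z w -> K w.
Proof. induction 1; auto. Qed.

Lemma chain_mono K e e' z w : e <= e' -> chain K e z w -> chain K e' z w.
Proof. intros He. induction 1. apply ch0; auto. eapply chS; eauto. lra. Qed.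

Lemma chain_snoc K e z y w : chain K e z y -> K w -> dist2 y w < e -> chain K e z w.
Proof.
  induction 1; intros Kw Hd.
  - eapply chS; eauto. apply ch0; auto.
  - eapply chS; eauto.
Qed.

Lemma first_switch K e (P : R*R -> Prop) z w : chain K e z w -> P z -> ~ P w ->
  exists y1 y2, chain K e z y1 /\ chain K e z y2 /\ P y1 /\ ~ P y2 /\ dist2 y1 y2 < e.
Proof.
  induction 1 as [z Kz|z y w Kz Hzy Hc IH]; intros Pz nPw.
  - contradiction.
  - destruct (classic (P y)) as [Py|nPy].
    + destruct (IH Py nPw) as (y1 & y2 & H1 & H2 & H3 & H4 & H5).
      exists y1, y2. repeat split; auto; eapply chS; eauto.
    + exists z, y. repeat split; auto. apply ch0; auto.
      eapply chS; eauto. apply ch0. eapply chain_Kl; eauto.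
Qed.

Definition conn K a z := forall e, 0 < e -> chain K e a z.

Lemma not_conn K a z : ~ conn K a z -> exists e, 0 < e /\ ~ chain K e a z.
Proof.
  intro H. apply NNPP. intro H'. apply H. intros e He. apply NNPP. intro Hc. apply H'. exists e. auto.
Qed.

Lemma conn_key (K : R*R -> Prop) M a (U V : R*R -> Prop) :
  (forall z, K z -> 0 <= fst z <= M /\ 0 <= snd z <= M) -> closedset K ->
  open2 U -> open2 V ->
  (forall p, K p /\ conn K a p -> U p \/ V p) ->
  (forall p, K p /\ conn K a p -> U p -> V p -> False) ->
  K a -> U a -> forall q, K q -> conn K a q -> V q -> False.
Proof.
  intros Hb Hcl HU HV Hcov Hdis Ka Ua q Kq Cq Vq.
  set (S := fun z => K z /\ conn K a z).
  set (TU := fun w eta => exists z r, S z /\ eta <= r /\ dist2 w z < r /\ forall y, dist2 z y < 3 * r -> U y).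
  set (TV := fun w eta => exists z r, S z /\ eta <= r /\ dist2 w z < r /\ forall y, dist2 z y < 3 * r -> V y).
  destruct (uniformize K M (fun w eta => ~ chain K eta a w \/ TU w eta \/ TV w eta) Hb Hcl) as (eta & Heta & Hu).
  { intros w e e' He [H|[H|H]].
    - left. intro Hc. apply H. eapply chain_mono; [|eauto]. lra.
    - right; left. destruct H as (z & r & H1 & H2 & H3 & H4). exists z, r. split; [exact H1|]. split; [lra|]. split; assumption.
    - right; right. destruct H as (z & r & H1 & H2 & H3 & H4). exists z, r. split; [exact H1|]. split; [lra|]. split; assumption. }
  { intros z Kz. destruct (classic (conn K a z)) as [Cz|nCz].
    - assert (Sz : S z) by (split; auto).
      destruct (Hcov z Sz) as [Uz|Vz].
      + destruct (HU z Uz) as (e & He & Hb'). exists (e/3), (e/3). split; [lra|]. split; [lra|].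
        intros w Kw Hw. right; left. exists z, (e/3). split; [exact Sz|]. split; [lra|]. split; [exact Hw|].
        intros y Hy. apply Hb'. lra.
      + destruct (HV z Vz) as (e & He & Hb'). exists (e/3), (e/3). split; [lra|]. split; [lra|].
        intros w Kw Hw. right; right. exists z, (e/3). split; [exact Sz|]. split; [lra|]. split; [exact Hw|].
        intros y Hy. apply Hb'. lra.
    - destruct (not_conn _ _ _ nCz) as (e & He & Hne).
      exists (e/2), (e/2). split; [lra|]. split; [lra|].
      intros w Kw Hw. left. intro Hc. apply Hne. apply (chain_snoc K e a w z); [|exact Kz|lra].
      eapply chain_mono; [|exact Hc]. lra. }
  assert (Hm : 0 < eta / 2) by lra.
  assert (Sa : S a) by (split; auto; intros e He; apply ch0; auto).
  assert (Sq : S q) by (split; auto).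
  assert (PA : TU a eta).
  { destruct (Hu a Ka) as [H|[H|H]].
    - exfalso. apply H. apply ch0; auto.
    - exact H.
    - exfalso. destruct H as (z & r & Sz & H2 & H3 & H4). apply (Hdis a Sa Ua).
      apply H4. rewrite dist2_sym. lra. }
  assert (PQ : ~ TU q eta).
  { intros (z & r & Sz & H2 & H3 & H4). apply (Hdis q Sq); auto.
    apply H4. rewrite dist2_sym. lra. }
  destruct (first_switch K (eta/2) (fun w => TU w eta) a q (Cq _ Hm) PA PQ)
    as (y1 & y2 & Hc1 & Hc2 & P1 & nP2 & Hd).
  assert (TV2 : TV y2 eta).
  { destruct (Hu y2 (chain_Kr _ _ _ _ Hc2)) as [H|[H|H]]; auto.
    - exfalso. apply H. eapply chain_mono; [|exact Hc2]. lra.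
    - contradiction. }
  destruct P1 as (z1 & r1 & S1 & Hr1 & Hd1 & B1).
  destruct TV2 as (z2 & r2 & S2 & Hr2 & Hd2 & B2).
  pose proof (dist2_tri z1 y1 z2). pose proof (dist2_tri y1 y2 z2).
  rewrite (dist2_sym z1 y1) in *. rewrite (dist2_sym y2 z2) in *.
  pose proof (dist2_refl z1). pose proof (dist2_refl z2).
  destruct (Rle_dec r2 r1).
  - apply (Hdis z2 S2).
    + apply B1. lra.
    + apply B2. lra.
  - apply (Hdis z1 S1).
    + apply B1. lra.
    + apply B2. rewrite dist2_sym. lra.
Qed.

Lemma conn_connected (K : R*R -> Prop) M a :
  (forall z, K z -> 0 <= fst z <= M /\ 0 <= snd z <= M) -> closedset K ->
  connected2 (fun z => K z /\ conn K a z).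
Proof.
  intros Hb Hcl (U & V & HU & HV & Hcov & (p & Sp & Up) & (q & Sq & Vq) & Hdis).
  assert (Ka : K a).
  { destruct Sp as [Kp Cp]. eapply chain_Kl. apply (Cp 1). lra. }
  assert (Sa : K a /\ conn K a a) by (split; auto; intros e He; apply ch0; auto).
  destruct (Hcov a Sa) as [Ua|Va].
  - destruct Sq as [H H0]. exact (conn_key K M a U V Hb Hcl HU HV Hcov Hdis Ka Ua q H H0 Vq).
  - destruct Sp as [H H0]. refine (conn_key K M a V U Hb Hcl HV HU _ _ Ka Va p H H0 Up).
    intros p0 H1. destruct (Hcov p0 H1); auto.
    intros p0 H1 H2 H3. eapply Hdis; eauto.
Qed.

Definition KZ (f : R*R -> R) z := quadrant z /\ f z = 0.

Definition onseg (p q z : R*R) := exists t, 0 <= t <= 1 /\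
  z = (fst p + t * (fst q - fst p), snd p + t * (snd q - snd p)).

Lemma onseg_sym p q z : onseg q p z -> onseg p q z.
Proof.
  intros (t & Ht & ->). exists (1 - t). split; [lra|]. f_equal; ring.
Qed.

Lemma cont_pt_of (g : R -> R) x :
  (forall eps, 0 < eps -> exists d, 0 < d /\ forall y, Rabs (y - x) < d -> Rabs (g y - g x) < eps) ->
  continuity_pt g x.
Proof.
  intros H. unfold continuity_pt, continue_in, limit1_in, limit_in. intros eps He.
  destruct (H eps He) as (d & Hd & H'). exists d; split; [lra|].
  intros y [_ Hy]. simpl in *. unfold R_dist in *. apply H'; auto.
Qed.

Definition clamp t := Rmax 0 (Rmin 1 t).

Lemma clamp_lip y t : Rabs (clamp y - clamp t) <= Rabs (y - t).
Proof. unfold clamp, Rmax, Rmin. repeat destruct Rle_dec; unfold Rabs; repeat destruct Rcase_abs; lra. Qed.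

Lemma clamp_bnd t : 0 <= clamp t <= 1.
Proof. unfold clamp, Rmax, Rmin. repeat destruct Rle_dec; lra. Qed.

Lemma clamp_id t : 0 <= t <= 1 -> clamp t = t.
Proof. intros. unfold clamp, Rmax, Rmin. repeat destruct Rle_dec; lra. Qed.

Lemma seg_zero f p q : continuous_on_quadrant f -> quadrant p -> quadrant q ->
  0 < f p -> f q <= 0 -> exists z, KZ f z /\ onseg p q z.
Proof.
  destruct p as [px py], q as [qx qy]. unfold quadrant; simpl.
  intros Hc [Hpx Hpy] [Hqx Hqy] Hfp Hfq.
  set (seg := fun c => (px + c * (qx - px), py + c * (qy - py))).
  assert (Hsq : forall c, 0 <= c <= 1 -> quadrant (seg c)).
  { intros c Hc'. unfold quadrant, seg; simpl. split; nra. }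
  set (g := fun t => f (seg (clamp t))).
  assert (Hg : continuity g).
  { intros t0. apply cont_pt_of. intros eps He.
    destruct (Hc (seg (clamp t0)) (Hsq _ (clamp_bnd t0)) eps He) as (d & Hd & H).
    set (D := Rabs (qx - px) + Rabs (qy - py) + 1).
    assert (HD : 0 < D) by (unfold D; pose proof (Rabs_pos (qx-px)); pose proof (Rabs_pos (qy-py)); lra).
    exists (d / D). split; [apply Rdiv_lt_0_compat; lra|].
    intros y Hy. unfold g. apply H. apply Hsq, clamp_bnd.
    eapply Rle_lt_trans; [apply dist2_le|]. unfold seg; simpl.
    replace (px + clamp y * (qx - px) - (px + clamp t0 * (qx - px))) with ((clamp y - clamp t0) * (qx - px)) by ring.
    replace (py + clamp y * (qy - py) - (py + clamp t0 * (qy - py))) with ((clamp y - clamp t0) * (qy - py)) by ring.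
    rewrite !Rabs_mult.
    pose proof (clamp_lip y t0). pose proof (Rabs_pos (clamp y - clamp t0)).
    pose proof (Rabs_pos (qx-px)); pose proof (Rabs_pos (qy-py)).
    assert (Rabs (y - t0) * D < d).
    { apply (Rmult_lt_compat_r D) in Hy; auto. unfold Rdiv in Hy. rewrite Rmult_assoc, Rinv_l in Hy; lra. }
    unfold D in *. nra. }
  assert (Hg0 : g 0 = f (px, py)).
  { unfold g. rewrite clamp_id by lra. unfold seg. f_equal. f_equal; ring. }
  assert (Hg1 : g 1 = f (qx, qy)).
  { unfold g. rewrite clamp_id by lra. unfold seg. f_equal. f_equal; ring. }
  destruct (IVT_cor g 0 1 Hg ltac:(lra)) as (t & Ht & Hgt).
  { rewrite Hg0, Hg1. nra. }
  exists (seg t). unfold g in Hgt. rewrite clamp_id in Hgt by lra. split.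
  - split; auto.
  - exists t. split; auto.
Qed.

Definition color (f : R*R -> R) p : bool := if Rlt_dec 0 (f p) then true else false.

Lemma seg_zero_bi f p q : continuous_on_quadrant f -> quadrant p -> quadrant q ->
  color f p <> color f q -> exists z, KZ f z /\ onseg p q z.
Proof.
  intros Hc Hp Hq. unfold color. destruct (Rlt_dec 0 (f p)), (Rlt_dec 0 (f q)); intros H; try congruence.
  - apply seg_zero; auto. lra.
  - destruct (seg_zero f q p) as (z & Hz & Hs); auto. lra. exists z. split; auto. apply onseg_sym; auto.
Qed.

Definition inbox x0 y0 h (z : R*R) := x0 <= fst z <= x0 + h /\ y0 <= snd z <= y0 + h.

Lemma onseg_inbox x0 y0 h p q z : inbox x0 y0 h p -> inbox x0 y0 h q -> onseg p q z -> inbox x0 y0 h z.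
Proof.
  intros [[? ?] [? ?]] [[? ?] [? ?]] (t & Ht & ->). unfold inbox; simpl. repeat split; nra.
Qed.

Lemma inbox_dist x0 y0 h z z' : inbox x0 y0 h z -> inbox x0 y0 h z' -> dist2 z z' <= 2 * h.
Proof.
  intros [[? ?] [? ?]] [[? ?] [? ?]]. eapply Rle_trans; [apply dist2_le|].
  unfold Rabs; repeat destruct Rcase_abs; lra.
Qed.

Definition reach f e z := exists a, KZ f a /\ fst a = 0 /\ chain (KZ f) e a z.

Definition chi f e p q : bool :=
  if excluded_middle_informative (color f p <> color f q /\ exists z, KZ f z /\ onseg p q z /\ reach f e z)
  then true else false.

Lemma chi_mono f e p q : color f p = color f q -> chi f e p q = false.
Proof.
  intros H. unfold chi. destruct excluded_middle_informative as [[H1 _]|]; auto. contradiction.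
Qed.

Lemma chi_transfer f e x0 y0 h p q p' q' : continuous_on_quadrant f -> 2 * h < e ->
  quadrant p' -> quadrant q' ->
  inbox x0 y0 h p -> inbox x0 y0 h q -> inbox x0 y0 h p' -> inbox x0 y0 h q' ->
  color f p' <> color f q' -> chi f e p q = true -> chi f e p' q' = true.
Proof.
  intros Hc He Hp' Hq' B1 B2 B3 B4 Hcol. unfold chi at 1.
  destruct excluded_middle_informative as [[_ (z & Kz & Sz & (a & Ka & Ha & Hch))]|]; [|discriminate].
  intros _. destruct (seg_zero_bi f p' q' Hc Hp' Hq' Hcol) as (z' & Kz' & Sz').
  unfold chi. destruct excluded_middle_informative as [|Hn]; auto. exfalso. apply Hn.
  split; auto. exists z'. split; auto. split; auto. exists a. split; auto. split; auto.
  apply (chain_snoc _ _ a z z'); auto.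
  pose proof (inbox_dist x0 y0 h z z' (onseg_inbox _ _ _ _ _ _ B1 B2 Sz) (onseg_inbox _ _ _ _ _ _ B3 B4 Sz')). lra.
Qed.

Lemma chi_eq f e x0 y0 h p q p' q' : continuous_on_quadrant f -> 2 * h < e ->
  quadrant p -> quadrant q -> quadrant p' -> quadrant q' ->
  inbox x0 y0 h p -> inbox x0 y0 h q -> inbox x0 y0 h p' -> inbox x0 y0 h q' ->
  color f p <> color f q -> color f p' <> color f q' -> chi f e p q = chi f e p' q'.
Proof.
  intros. destruct (chi f e p q) eqn:E1, (chi f e p' q') eqn:E2; auto.
  - rewrite (chi_transfer f e x0 y0 h p q p' q') in E2; auto.
  - rewrite (chi_transfer f e x0 y0 h p' q' p q) in E1; auto.
Qed.

Lemma triangle_even f e x0 y0 h p1 p2 p3 : continuous_on_quadrant f -> 2 * h < e ->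
  quadrant p1 -> quadrant p2 -> quadrant p3 ->
  inbox x0 y0 h p1 -> inbox x0 y0 h p2 -> inbox x0 y0 h p3 ->
  xorb (chi f e p1 p2) (xorb (chi f e p2 p3) (chi f e p1 p3)) = false.
Proof.
  intros.
  destruct (Bool.bool_dec (color f p1) (color f p2)) as [E12|E12];
  destruct (Bool.bool_dec (color f p2) (color f p3)) as [E23|E23];
  destruct (Bool.bool_dec (color f p1) (color f p3)) as [E13|E13].
  - rewrite !chi_mono; auto.
  - congruence.
  - congruence.
  - rewrite (chi_mono f e p1 p2 E12). rewrite (chi_eq f e x0 y0 h p2 p3 p1 p3); auto. destruct (chi f e p1 p3); reflexivity.
  - congruence.
  - rewrite (chi_mono f e p2 p3 E23). rewrite (chi_eq f e x0 y0 h p1 p2 p1 p3); auto.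
    destruct (chi f e p1 p3); reflexivity.
  - rewrite (chi_mono f e p1 p3 E13). rewrite (chi_eq f e x0 y0 h p1 p2 p2 p3); auto.
    destruct (chi f e p2 p3); reflexivity.
  - destruct (color f p1), (color f p2), (color f p3); congruence.
Qed.

Fixpoint xs (n : nat) (g : nat -> bool) : bool :=
  match n with O => false | S k => xorb (xs k g) (g k) end.

Lemma xs_ext n g k : (forall i, (i < n)%nat -> g i = k i) -> xs n g = xs n k.
Proof. induction n; intros H; simpl; auto. rewrite IHn by (intros; apply H; lia). rewrite H by lia. auto. Qed.

Lemma xs_xor n g k : xs n (fun i => xorb (g i) (k i)) = xorb (xs n g) (xs n k).
Proof. induction n; simpl; auto. rewrite IHn. destruct (xs n g), (xs n k), (g n), (k n); reflexivity. Qed.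

Lemma xs_tele n g : xs n (fun i => xorb (g i) (g (S i))) = xorb (g 0%nat) (g n).
Proof. induction n; simpl. destruct (g 0%nat); reflexivity. rewrite IHn. destruct (g 0%nat), (g n), (g (S n)); reflexivity. Qed.

Lemma xs_false n g : (forall i, (i < n)%nat -> g i = false) -> xs n g = false.
Proof. intros H. rewrite (xs_ext n g (fun _ => false)) by auto. induction n; simpl; auto. rewrite IHn; auto. Qed.

Lemma xs_swap n m g : xs n (fun i => xs m (fun j => g i j)) = xs m (fun j => xs n (fun i => g i j)).
Proof.
  induction n; simpl.
  - symmetry. apply xs_false. auto.
  - rewrite IHn. rewrite <- xs_xor. reflexivity.
Qed.

Lemma grid_parity (N : nat) (Hh Vv Dd : nat -> nat -> bool) :
  (forall i j, (i < N)%nat -> (j < N)%nat -> xorb (Hh i j) (xorb (Vv (S i) j) (Dd i j)) = false) ->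
  (forall i j, (i < N)%nat -> (j < N)%nat -> xorb (Vv i j) (xorb (Hh i (S j)) (Dd i j)) = false) ->
  xorb (xs N (fun i => xorb (Hh i 0%nat) (Hh i N))) (xs N (fun j => xorb (Vv 0%nat j) (Vv N j))) = false.
Proof.
  intros HL HU.
  assert (Hcell : xs N (fun i => xs N (fun j =>
     xorb (xorb (Hh i j) (Hh i (S j))) (xorb (Vv i j) (Vv (S i) j)))) = false).
  { apply xs_false. intros i Hi. apply xs_false. intros j Hj.
    pose proof (HL i j Hi Hj). pose proof (HU i j Hi Hj).
    destruct (Hh i j), (Hh i (S j)), (Vv i j), (Vv (S i) j), (Dd i j); simpl in *; congruence. }
  rewrite <- Hcell. symmetry.
  rewrite (xs_ext N _ (fun i => xorb (xs N (fun j => xorb (Hh i j) (Hh i (S j))))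
                                   (xs N (fun j => xorb (Vv i j) (Vv (S i) j))))).
  2:{ intros i _. apply xs_xor. }
  rewrite xs_xor. f_equal.
  - apply xs_ext. intros i _. apply (xs_tele N (fun j => Hh i j)).
  - rewrite xs_swap. apply xs_ext. intros j _. apply (xs_tele N (fun i => Vv i j)).
Qed.

Lemma partI f Rad : continuous_on_quadrant f -> 0 < f (0, 0) -> 0 < Rad ->
  (forall x y, 0 <= x -> 0 <= y -> x ^ 2 + y ^ 2 > Rad ^ 2 -> f (x, y) < 0) ->
  forall e, 0 < e -> exists a b, KZ f a /\ fst a = 0 /\ snd b = 0 /\ chain (KZ f) e a b.
Proof.
  intros Hc Hf0 HR Hneg e He.
  destruct (classic (exists z, snd z = 0 /\ reach f e z)) as [(z & Hz & (a & Ka & Ha & Hch))|Hno].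
  { exists a, z. auto. }
  exfalso.
  set (L := Rad + 1).
  destruct (INR_archimed (e/4) L) as (N & HN). lra.
  assert (HNpos : 0 < INR N) by (assert (0 < L) by (unfold L; lra); nra).
  set (h := L / INR N).
  assert (Hh : 0 < h) by (unfold h, L; apply Rdiv_lt_0_compat; lra).
  assert (HNh : INR N * h = L) by (unfold h; field; lra).
  assert (H2h : 2 * h < e).
  { assert (h * INR N < e / 4 * INR N) by (rewrite Rmult_comm, HNh; lra).
    apply Rmult_lt_reg_r in H; lra. }
  set (P := fun i j : nat => (INR i * h, INR j * h)).
  assert (PQ : forall i j, quadrant (P i j)).
  { intros i j. unfold P, quadrant; simpl. pose proof (pos_INR i); pose proof (pos_INR j). split; nra. }
  assert (PB : forall i j i' j', (i' = i \/ i' = S i) -> (j' = j \/ j' = S j) -> inbox (INR i * h) (INR j * h) h (P i' j')).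
  { intros i j i' j' Hi Hj. unfold inbox, P; simpl.
    destruct Hi as [->| ->], Hj as [->| ->]; rewrite ?S_INR; lra. }
  set (Hh_ := fun i j => chi f e (P i j) (P (S i) j)).
  set (Vv := fun i j => chi f e (P i j) (P i (S j))).
  set (Dd := fun i j => chi f e (P i j) (P (S i) (S j))).
  pose proof (grid_parity N Hh_ Vv Dd) as Hpar.
  assert (Hpar' : xorb (xs N (fun i => xorb (Hh_ i 0%nat) (Hh_ i N))) (xs N (fun j => xorb (Vv 0%nat j) (Vv N j))) = false).
  { apply Hpar.
    - intros i j Hi Hj. unfold Hh_, Vv, Dd.
      apply (triangle_even f e (INR i * h) (INR j * h) h); auto.
    - intros i j Hi Hj. unfold Hh_, Vv, Dd.
      apply (triangle_even f e (INR i * h) (INR j * h) h); auto. }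
  clear Hpar. rename Hpar' into Hpar.
  rewrite xs_false in Hpar.
  - rewrite (xs_ext N _ (fun j => xorb (color f (P 0%nat j)) (color f (P 0%nat (S j))))) in Hpar.
    + rewrite xs_tele in Hpar.
      assert (C0 : color f (P 0%nat 0%nat) = true).
      { unfold color, P. simpl. replace (0 * h) with 0 by ring. destruct Rlt_dec; auto; lra. }
      assert (CN : color f (P 0%nat N) = false).
      { unfold color, P. simpl. rewrite HNh. destruct Rlt_dec; auto. exfalso.
        assert (f (0 * h, L) < 0) by (apply Hneg; unfold L; nra). lra. }
      rewrite C0, CN in Hpar. simpl in Hpar. discriminate.
    + intros j Hj.
      assert (HVN : Vv N j = false).
      { unfold Vv. apply chi_mono. unfold color, P. rewrite HNh.
        destruct (Rlt_dec 0 (f (L, INR j * h))) as [r1|r1]; destruct (Rlt_dec 0 (f (L, INR (S j) * h))) as [r2|r2]; auto.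
        - exfalso. assert (f (L, INR j * h) < 0); [|lra].
          apply Hneg; pose proof (pos_INR j); unfold L in *; nra.
        - exfalso. assert (f (L, INR (S j) * h) < 0); [|lra].
          apply Hneg; pose proof (pos_INR (S j)); unfold L in *; nra. }
      rewrite HVN. rewrite Bool.xorb_false_r. unfold Vv.
      destruct (Bool.bool_dec (color f (P 0%nat j)) (color f (P 0%nat (S j)))) as [E|E].
      * rewrite chi_mono by auto. rewrite E. destruct (color f (P 0%nat (S j))); reflexivity.
      * destruct (seg_zero_bi f _ _ Hc (PQ _ _) (PQ _ _) E) as (z & Kz & Sz).
        unfold chi. destruct excluded_middle_informative as [_|Hn].
        { revert E. destruct (color f (P 0%nat j)), (color f (P 0%nat (S j))); intros; simpl; congruence. }
        exfalso. apply Hn. split; auto. exists z. split; auto. split; auto.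
        exists z. split; auto. split.
        { destruct Sz as (t & Ht & ->). unfold P; simpl. ring. }
        apply ch0; auto.
  - intros i Hi.
    assert (HB : Hh_ i 0%nat = false).
    { unfold Hh_, chi. destruct excluded_middle_informative as [[_ (z & Kz & Sz & Hr)]|]; auto.
      exfalso. apply Hno. exists z. split; auto.
      destruct Sz as (t & Ht & ->). unfold P; simpl. ring. }
    assert (HT : Hh_ i N = false).
    { unfold Hh_. apply chi_mono. unfold color, P. rewrite HNh.
      destruct (Rlt_dec 0 (f (INR i * h, L))) as [r1|r1]; destruct (Rlt_dec 0 (f (INR (S i) * h, L))) as [r2|r2]; auto.
      - exfalso. assert (f (INR i * h, L) < 0); [|lra].
        apply Hneg; pose proof (pos_INR i); unfold L in *; nra.
      - exfalso. assert (f (INR (S i) * h, L) < 0); [|lra].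
        apply Hneg; pose proof (pos_INR (S i)); unfold L in *; nra. }
    rewrite HB, HT. reflexivity.
Qed.

Lemma closed_of_sub (K T : R*R -> Prop) : closedset K -> (forall z, T z -> K z) ->
  (forall z, K z -> ~ T z -> exists rho, 0 < rho /\ forall w, T w -> dist2 w z < rho -> False) ->
  closedset T.
Proof.
  intros HK Hsub H z nT. destruct (classic (K z)) as [Kz|nK].
  - auto.
  - destruct (HK z nK) as (rho & Hr & H'). exists rho. split; auto. intros w Tw. apply H'; auto.
Qed.

Theorem lemma2p2 (f : R * R -> R) (Rad : R) :
  continuous_on_quadrant f ->
  0 < f (0, 0) ->
  0 < Rad ->
  (forall x y, 0 <= x -> 0 <= y -> x ^ 2 + y ^ 2 > Rad ^ 2 -> f (x, y) < 0) ->
  exists S : R * R -> Prop,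
    (forall z, S z -> quadrant z /\ f z = 0) /\
    compact2 S /\ connected2 S /\
    exists r, 0 < r /\ r < Rad /\
      (exists y, r <= y <= Rad /\ S (0, y)) /\
      (exists x, r <= x <= Rad /\ S (x, 0)).
Proof.
  intros Hc Hf0 HR Hneg.
  set (K := KZ f).
  assert (Kb : forall z, K z -> 0 <= fst z <= Rad /\ 0 <= snd z <= Rad).
  { intros [x y] [[Hx Hy] Hz]. simpl in *.
    assert (x ^ 2 + y ^ 2 <= Rad ^ 2).
    { destruct (Rle_dec (x ^ 2 + y ^ 2) (Rad ^ 2)); auto.
      assert (f (x, y) < 0) by (apply Hneg; auto; lra). lra. }
    split; split; auto; nra. }
  assert (Kc : closedset K).
  { intros [x y] nK. destruct (Rlt_dec x 0) as [Hx|Hx].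
    { exists (- x). split; [lra|]. intros w [[Hw1 _] _] Hd. pose proof (dist2_ge_x w (x,y)). simpl in *.
      unfold Rabs in *; destruct Rcase_abs; lra. }
    destruct (Rlt_dec y 0) as [Hy|Hy].
    { exists (- y). split; [lra|]. intros w [[_ Hw1] _] Hd. pose proof (dist2_ge_y w (x,y)). simpl in *.
      unfold Rabs in *; destruct Rcase_abs; lra. }
    assert (Hq : quadrant (x,y)) by (unfold quadrant; simpl; lra).
    assert (Hfz : f (x,y) <> 0) by (intro; apply nK; split; auto).
    destruct (Hc (x,y) Hq (Rabs (f (x,y)))) as (d & Hd & H). { apply Rabs_pos_lt; auto. }
    exists d. split; auto. intros w [Qw Fw] Hdw. specialize (H w Qw Hdw). rewrite Fw in H.
    replace (0 - f (x,y)) with (- f (x,y)) in H by ring. rewrite Rabs_Ropp in H. lra. }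
  set (A := fun z => K z /\ fst z = 0).
  set (B := fun z => K z /\ snd z = 0).
  assert (Ab : forall z, A z -> 0 <= fst z <= Rad /\ 0 <= snd z <= Rad) by (intros z [Kz _]; auto).
  assert (Bb : forall z, B z -> 0 <= fst z <= Rad /\ 0 <= snd z <= Rad) by (intros z [Kz _]; auto).
  assert (Ac : closedset A).
  { apply (closed_of_sub K); auto. intros z Kz; firstorder. intros z Kz nA.
    assert (fst z <> 0) by (intro; apply nA; split; auto).
    exists (Rabs (fst z)). split; [apply Rabs_pos_lt; auto|].
    intros w [_ Hw] Hd. pose proof (dist2_ge_x w z). rewrite Hw in H0.
    replace (0 - fst z) with (- fst z) in H0 by ring. rewrite Rabs_Ropp in H0. lra. }
  assert (Bc : closedset B).
  { apply (closed_of_sub K); auto. intros z Kz; firstorder. intros z Kz nB.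
    assert (snd z <> 0) by (intro; apply nB; split; auto).
    exists (Rabs (snd z)). split; [apply Rabs_pos_lt; auto|].
    intros w [_ Hw] Hd. pose proof (dist2_ge_y w z). rewrite Hw in H0.
    replace (0 - snd z) with (- snd z) in H0 by ring. rewrite Rabs_Ropp in H0. lra. }
  assert (Hab : exists a b, A a /\ B b /\ conn K a b).
  { apply NNPP. intro Hn.
    assert (Step1 : forall a, A a -> exists eta, 0 < eta /\ forall b, B b -> ~ chain K eta a b).
    { intros a Aa. apply (uniformize B Rad (fun w eta => ~ chain K eta a w)); auto.
      - intros w e e' He H Hch. apply H. eapply chain_mono; [|exact Hch]. lra.
      - intros z Bz. assert (~ conn K a z) by (intro; apply Hn; exists a, z; auto).
        destruct (not_conn _ _ _ H) as (e & He & Hne).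
        exists (e/2), (e/2). split; [lra|]. split; [lra|].
        intros w Bw Hw Hch. apply Hne. apply (chain_snoc K e a w z).
        + eapply chain_mono; [|exact Hch]. lra.
        + destruct Bz; auto.
        + lra. }
    destruct (uniformize A Rad (fun w eta => forall b, B b -> ~ chain K eta w b) Ab Ac) as (eta & Heta & Hu).
    - intros w e e' He H b Bb' Hch. apply (H b Bb'). eapply chain_mono; [|exact Hch]. lra.
    - intros z Az. destruct (Step1 z Az) as (e & He & H).
      exists (e/2), (e/2). split; [lra|]. split; [lra|].
      intros w Aw Hw b Bb' Hch. apply (H b Bb'). apply (chS K e z w b).
      + destruct Az; auto.
      + rewrite dist2_sym. lra.
      + eapply chain_mono; [|exact Hch]. lra.
    - destruct (partI f Rad Hc Hf0 HR Hneg eta Heta) as (a & b & Ka & Ha & Hb & Hch).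
      apply (Hu a (conj Ka Ha) b); auto. split; auto. eapply chain_Kr; eauto. }
  destruct Hab as (a & b & [Ka Ha] & [Kb' Hb] & Cab).
  set (S := fun z => K z /\ conn K a z).
  exists S. split; [|split; [|split]].
  - intros z [Kz _]. exact Kz.
  - apply (closed_bounded_compact S Rad). intros z [Kz _]; auto.
    apply (closed_of_sub K); auto. intros z [Kz _]; auto.
    intros z Kz nS. assert (~ conn K a z) by (intro; apply nS; split; auto).
    destruct (not_conn _ _ _ H) as (e & He & Hne). exists e. split; auto.
    intros w [Kw Cw] Hd. apply Hne. apply (chain_snoc K e a w z); auto.
  - apply (conn_connected K Rad a); auto.
  - assert (Hq0 : quadrant (0,0)) by (unfold quadrant; simpl; lra).
    destruct (Hc (0,0) Hq0 (f (0,0)) Hf0) as (d & Hd & Hdd).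
    assert (Hpos : forall z, K z -> d <= Rabs (fst z) + Rabs (snd z)).
    { intros z [Qz Fz]. destruct (Rle_dec d (Rabs (fst z) + Rabs (snd z))) as [|Hlt]; auto.
      exfalso. assert (dist2 z (0,0) < d).
      { eapply Rle_lt_trans; [apply dist2_le|]. simpl. rewrite !Rminus_0_r. lra. }
      specialize (Hdd z Qz H). rewrite Fz in Hdd.
      replace (0 - f (0,0)) with (- f (0,0)) in Hdd by ring. rewrite Rabs_Ropp, Rabs_right in Hdd; lra. }
    exists (Rmin (d/2) (Rad/2)). pose proof (Rmin_l (d/2) (Rad/2)). pose proof (Rmin_r (d/2) (Rad/2)).
    split; [apply Rmin_pos; lra|]. split; [lra|]. split.
    + exists (snd a). pose proof (Kb a Ka). pose proof (Hpos a Ka). rewrite Ha, Rabs_R0 in H2.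
      rewrite Rabs_right in H2 by lra. split; [lra|].
      destruct a as [ax ay]. simpl in *. subst ax. split; auto. intros e He. apply ch0; auto.
    + exists (fst b). pose proof (Kb b Kb'). pose proof (Hpos b Kb'). rewrite Hb, Rabs_R0 in H2.
      rewrite Rabs_right in H2 by lra. split; [lra|].
      destruct b as [bx by']. simpl in *. subst by'. split; auto.
Qed.
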